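(* The groups $\left\{\begin{bmatrix}a&b\\0&1\end{bmatrix}: a,b\in\mathbb{R},\ a\neq0\right\}$ (i.e. $\mathbb{R}^*\ltimes\mathbb{R}$) and $\left\{\begin{bmatrix}a&b\\0&1\end{bmatrix}: a,b\in\mathbb{R},\ a>0\right\}$ (i.e. $\mathbb{R}\ltimes\mathbb{R}$), with their usual Lie group structures, have the topological $R_\infty$-property.
   Context: For an automorphism $\varphi$ of a group $G$, the $\varphi$-twisted conjugacy classes are the equivalence classes of the relation $x\sim_\varphi y$ iff $y=gx\varphi(g)^{-1}$ for some $g\in G$; $R(\varphi)\in\mathbb{N}\cup\{\infty\}$ is their number. A topological group $G$ has the topological $R_\infty$-property if $R(\varphi)=\infty$ for every automorphism $\varphi$ of $G$ that is a homeomorphism (for a Lie group: every continuous automorphism). *)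

(* Defs.v *)
From HB Require Import structures.
From mathcomp Require Import all_boot all_order all_algebra.
From mathcomp Require Import all_classical all_reals topology normedtype.
Set Implicit Arguments. Unset Strict Implicit. Unset Printing Implicit Defensive.
Import Order.TTheory GRing.Theory Num.Theory.
Import numFieldNormedType.Exports.
Local Open Scope classical_set_scope.
Local Open Scope ring_scope.

(* The matrix [[a, b], [0, 1]] is encoded as the pair (a, b) in R * R,
   a subset of R^2 carrying the subspace (= usual Lie group) topology. *)
Section AffineGroups.
Variable R : realType.

(* matrix product [[a,b],[0,1]] * [[c,d],[0,1]] = [[ac, ad+b],[0,1]] *)
Definition affmul (p q : R * R) : R * R := (p.1 * q.1, p.1 * q.2 + p.2).
(* matrix inverse [[a,b],[0,1]]^-1 = [[a^-1, -b/a],[0,1]] *)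
Definition affinv (p : R * R) : R * R := (p.1^-1, - (p.2 / p.1)).

Definition aff_full : set (R * R) := [set p | p.1 != 0].
Definition aff_pos : set (R * R) := [set p | 0 < p.1].

Definition top_automorphism (S : set (R * R)) (phi : R * R -> R * R) : Prop :=
  (forall x, S x -> S (phi x)) /\
  (forall x y, S x -> S y -> phi (affmul x y) = affmul (phi x) (phi y)) /\
  {within S, continuous phi} /\
  exists psi : R * R -> R * R,
    (forall x, S x -> S (psi x)) /\
    (forall x, S x -> psi (phi x) = x) /\
    (forall x, S x -> phi (psi x) = x) /\
    {within S, continuous psi}.

Definition twisted_rel (S : set (R * R)) (phi : R * R -> R * R) (x y : R * R) :=
  exists2 g, S g & y = affmul (affmul g x) (affinv (phi g)).

Definition twisted_classes (S : set (R * R)) (phi : R * R -> R * R)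
  : set (set (R * R)) :=
  [set [set y | S y /\ twisted_rel S phi x y] | x in S].

Definition top_R_infty (S : set (R * R)) : Prop :=
  forall phi, top_automorphism S phi -> infinite_set (twisted_classes S phi).

End AffineGroups.

(* Main.v *)
Require Import Defs.
From mathcomp Require Import all_boot all_order all_algebra.
From mathcomp Require Import all_classical all_reals topology normedtype.
Import Order.TTheory GRing.Theory Num.Theory.
Local Open Scope classical_set_scope.
Local Open Scope ring_scope.

Lemma additive_pos_id (R : realType) (F : R -> R) :
  (forall x y, F (x + y) = F x + F y) -> F 1 = 1 ->
  (forall x, 0 < x -> 0 < F x) -> forall x, F x = x.
Proof.
move=> FD F1 Fp.
have F0 : F 0 = 0 by have h := FD 0 0; rewrite addr0 in h; apply: (addrI (F 0)); rewrite addr0 -h.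
have FN x : F (- x) = - F x by apply/eqP; rewrite -subr_eq0 opprK -FD addNr F0.
have FB x y : F (x - y) = F x - F y by rewrite FD FN.
have Fmono x y : x < y -> F x < F y.
  by move=> lt; rewrite -subr_gt0 -FB; apply: Fp; rewrite subr_gt0.
have Fn (n : nat) : F n%:R = n%:R.
  by elim: n => [|n IH]; rewrite ?F0 // -addn1 natrD FD IH F1.
have Fz (z : int) : F z%:~R = z%:~R.
  case: z => n; first by rewrite -pmulrn Fn.
  by rewrite NegzE mulrNz FN -pmulrn Fn.
have FMn x (n : nat) : F (x *+ n) = F x *+ n.
  by elim: n => [|n IH]; rewrite ?mulr0n ?F0 // !mulrS FD IH.
have L x : ~ (F x < x).
  move=> lt; set d := x - F x.
  have d0 : 0 < d by rewrite subr_gt0.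
  have [k hk] : exists k : nat, 1 < d *+ k.
    exists (Num.bound (d^-1)).
    have di : 0 <= d^-1 by rewrite invr_ge0 ltW.
    have hb := archi_boundP di.
    have : d * d^-1 < d * (Num.bound d^-1)%:R by rewrite ltr_pM2l.
    by rewrite mulfV ?gt_eqF // mulr_natr.
  set z := Num.floor (F x *+ k) + 1.
  have h1 : F x *+ k < z%:~R by apply: floorD1_gt.
  have h2 : z%:~R < x *+ k.
    rewrite /z intrD (le_lt_trans (lerD (floor_le _) (lexx _))) //.
    by rewrite -ltrBrDl -mulrnBl.
  have := Fmono _ _ h2; rewrite Fz FMn => h3.
  by have := lt_trans h1 h3; rewrite ltxx.
move=> x; case: (ltgtP (F x) x) => // h; first by case: (L x).
by case: (L (- x)); rewrite FN ltrN2.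
Qed.
Section Gen.
Variable R : realType.
Variable P : R -> Prop.
Hypothesis P1 : forall a, 0 < a -> P a.
Hypothesis P0 : forall a, P a -> a != 0.
Variable phi : R * R -> R * R.
Hypothesis hS : forall x, P x.1 -> P (phi x).1.
Hypothesis hM : forall x y, P x.1 -> P y.1 -> phi (affmul x y) = affmul (phi x) (phi y).
Hypothesis hinj : forall x y, P x.1 -> P y.1 -> phi x = phi y -> x = y.

Let P1' : P 1. Proof. exact: P1. Qed.

Lemma phi_e : phi (1, 0) = (1, 0).
Proof.
have := hM (1, 0) (1, 0) P1' P1'; rewrite /affmul /= mul1r mulr0 addr0.
case E: (phi (1,0)) => [p q] /= [h1 h2].
have p0 : p != 0 by have := P0 _ (hS (1, 0) P1'); rewrite E.
have p1 : p = 1 by apply: (mulfI p0); rewrite mulr1 -h1.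
move: h2; rewrite p1 mul1r => h2.
by congr pair; apply: (addrI q); rewrite addr0 -h2.
Qed.

Lemma phiN1 b : (phi (1, b)).1 = 1.
Proof.
have P2 : P 2 by apply: P1.
have e1 : affmul (2, 0) (1, b) = affmul (1, b + b) (2, 0).
  by rewrite /affmul /= mulr1 mul1r mulr0 add0r addr0 mulr2n mulrDl mul1r.
have e2 : affmul (1, b) (1, b) = (1, b + b).
  by rewrite /affmul /= mulr1 mul1r.
have := congr1 phi e1; rewrite !hM //= => /(congr1 fst) /=.
rewrite -e2 hM //= mulrC => /mulIf h.
have p0 : (phi (1, b)).1 != 0 by apply: P0; apply: hS.
have p20 : (phi (2, 0)).1 != 0 by apply: P0; apply: hS.
have := h p20 => h'.
by apply: (mulfI p0); rewrite mulr1 -h'.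
Qed.

Definition mu b := (phi (1, b)).2.
Definition f a := (phi (a, 0)).1.

Lemma phiN b : phi (1, b) = (1, mu b).
Proof. by move: (phiN1 b); rewrite /mu; case: (phi (1, b)) => p q /= ->. Qed.

Lemma muD b c : mu (b + c) = mu b + mu c.
Proof.
have : affmul (1, b) (1, c) = (1, b + c) by rewrite /affmul /= mulr1 mul1r addrC.
move/(congr1 phi); rewrite hM // !phiN /affmul /= mul1r => -[<-].
by rewrite mul1r addrC.
Qed.

Lemma muM a b : P a -> mu (a * b) = f a * mu b.
Proof.
move=> Pa.
have : affmul (a, 0) (1, b) = affmul (1, a * b) (a, 0).
  by rewrite /affmul /= !mulr1 !mul1r addr0 add0r.
move/(congr1 phi); rewrite !hM // !phiN /affmul /= /f.
case: (phi (a, 0)) => p q /= [] _; rewrite mul1r => h.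
by apply: (addrI q); rewrite -h addrC.
Qed.

Lemma fM a c : P a -> P c -> f (a * c) = f a * f c.
Proof.
move=> Pa Pc.
have : affmul (a, 0) (c, 0) = (a * c, 0) by rewrite /affmul /= mulr0 addr0.
by move/(congr1 phi); rewrite hM // /affmul /f => <-.
Qed.

Lemma mu1 : mu 1 != 0.
Proof.
apply/eqP => m0.
have := @hinj (1, 1) (1, 0) P1' P1'; rewrite phiN phi_e m0 => /(_ erefl) [].
by apply/eqP; rewrite oner_eq0.
Qed.

Lemma f_id a : P a -> f a = a.
Proof.
move=> Pa.
set F := fun x => mu x / mu 1.
have Ff x : P x -> F x = f x.
  by move=> Px; rewrite /F -[X in mu X]mulr1 muM // mulfK // mu1.
have FD x y : F (x + y) = F x + F y by rewrite /F muD mulrDl.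
have F1 : F 1 = 1 by rewrite /F divff // mu1.
have Fp (x : R) : 0 < x -> 0 < F x.
  move=> x0; have sq : 0 <= x by apply: ltW.
  have s0 : 0 < Num.sqrt x by rewrite sqrtr_gt0.
  have Ps := P1 _ s0.
  have e : f x = f (Num.sqrt x) * f (Num.sqrt x) by rewrite -(fM _ _ Ps Ps) -expr2 sqr_sqrtr.
  rewrite Ff; last exact: P1.
  rewrite e -expr2.
  rewrite lt_def sqrf_eq0 exprn_even_ge0 ?andbT //.
  by apply: P0; apply: (hS (Num.sqrt x, 0)).
by rewrite -Ff // (@additive_pos_id R F FD F1 Fp a).
Qed.
End Gen.

Lemma R_infty_gen (R : realType) (P : R -> Prop) :
  (forall a : R, 0 < a -> P a) -> (forall a : R, P a -> a != 0) ->
  top_R_infty [set p : R * R | P p.1].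
Proof.
move=> P1 P0 phi [hS [hM [_ [psi [hpsi [hl [hr _]]]]]]].
have hinj : forall x y : R * R, P x.1 -> P y.1 -> phi x = phi y -> x = y.
  by move=> x y Px Py e; rewrite -(hl x Px) -(hl y Py) e.
have fid := @f_id R P P1 P0 phi hS hM hinj.
have P1' : P 1 by apply: P1.
have ph1 g : P g.1 -> (phi g).1 = g.1.
  move=> Pg.
  have eg : g = affmul (1, g.2) (g.1, 0).
    by rewrite /affmul /= mul1r mulr0 add0r -surjective_pairing.
  rewrite eg hM //= (@phiN R P P1 P0 phi hS hM) /= mul1r.
  by rewrite mul1r; apply: fid.
have inv x y : twisted_rel [set p : R * R | P p.1] phi x y -> y.1 = x.1.
  case=> g Pg ->; rewrite /affmul /affinv /= ph1 //.
  by rewrite mulrAC divff ?mul1r // P0.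
have refl x : P x.1 -> twisted_rel [set p : R * R | P p.1] phi x x.
  move=> Px; exists (1, 0) => //.
  rewrite (@phi_e R P P1 P0 phi hS hM) /affmul /affinv /=. by rewrite !mul1r invr1 mulr1 mul0r oppr0 mulr0 !add0r addr0 -surjective_pairing.
apply/infiniteP/pcard_leP/injfunPex.
pose h (n : nat) := [set y | P y.1 /\ twisted_rel [set p : R * R | P p.1] phi (n.+1%:R, 0) y].
have Pn (n : nat) : P (n.+1%:R : R) by apply: P1.
exists h.
  by move=> n _; exists (n.+1%:R, 0); [exact: Pn|].
move=> n m _ _ e.
have : h m (n.+1%:R, 0) by rewrite -e; split; [exact: Pn | apply: refl; exact: Pn].
case=> _ /inv /= /eqP; rewrite eqr_nat => /eqP [].
by [].
Qed.

Theorem corollary5p2 (R : realType) :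
  top_R_infty (@aff_full R) /\ top_R_infty (@aff_pos R).
Proof.
split.
- apply: (@R_infty_gen R (fun a => a != 0)).
    by move=> a a0; rewrite gt_eqF.
  by [].
- apply: (@R_infty_gen R (fun a => 0 < a)) => //.
  by move=> a a0; rewrite gt_eqF.
Qed.
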